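(* For every $n\ge1$, the Houghton group $\mathcal{H}_n$ is not co-Hopfian; that is, there is an injective homomorphism $\mathcal{H}_n\to\mathcal{H}_n$ that is not surjective.
   Context: Let $\mathbb{N}=\{1,2,3,\dots\}$, $\mathbb{Z}_n$ the integers modulo $n$, $R_n=\mathbb{Z}_n\times\mathbb{N}$. The Houghton group $\mathcal{H}_n$ is the group of permutations $\sigma$ of $R_n$ for which there exist $N\ge0$ and integers $t_i$ with $(i,k)\sigma=(i,k+t_i)$ for all $i\in\mathbb{Z}_n$, $k\ge N$ (right actions). A group is co-Hopfian if every injective endomorphism of it is an automorphism. *)

(* Defs.v *)
From mathcomp Require Import all_boot all_order all_algebra.
Set Implicit Arguments. Unset Strict Implicit. Unset Printing Implicit Defensive.
Import GRing.Theory Num.Theory.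

(* R_n = Z_n x N.  Z_n is represented by 'I_n (n >= 1), and
   N = {1,2,3,...} is represented by nat via the relabelling k <-> k+1
   (the pair (i, k) : 'I_n * nat stands for (i, k+1)). *)
Definition Ray (n : nat) : Type := ('I_n * nat)%type.

Definition houghton (n : nat) (s : Ray n -> Ray n) : Prop :=
  bijective s /\
  exists (N : nat) (t : 'I_n -> int),
    forall (i : 'I_n) (k : nat), (N <= k)%N ->
      (s (i, k)).1 = i /\ ((s (i, k)).2 : int) = (k%:Z + t i)%R.

(* Group product with right actions: (x)(s t) = ((x)s)t, i.e. s*t = t \o s. *)
Definition hmul (n : nat) (s t : Ray n -> Ray n) : Ray n -> Ray n := t \o s.

(* Main.v *)
Require Import Defs.
From mathcomp Require Import all_boot all_order all_algebra.
From Stdlib Require Import FunctionalExtensionality.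
Import GRing.Theory Num.Theory.

Definition shiftc (n : nat) (s : Ray n -> Ray n) : Ray n -> Ray n :=
  fun x => match x.2 with
           | 0 => x
           | k.+1 => ((s (x.1, k)).1, (s (x.1, k)).2.+1)
           end.

Arguments shiftc {n}.

Lemma shiftc_comp n (s t : Ray n -> Ray n) (x : Ray n) :
  shiftc t (shiftc s x) = shiftc (t \o s)%FUN x.
Proof. by move: x => [i [|k]] //; rewrite /shiftc /=; case: (s (i, k)). Qed.

Lemma shiftc_id n (x : Ray n) : shiftc (@id (Ray n)) x = x.
Proof. by move: x => [i [|k]]. Qed.

Definition swp {n} (i0 : 'I_n) (x : Ray n) : Ray n :=
  if x == (i0, 0) then (i0, 1) else if x == (i0, 1) then (i0, 0) else x.

Lemma swpK n (i0 : 'I_n) : cancel (swp i0) (swp i0).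
Proof.
move=> [a b]; rewrite /swp.
case: (eqVneq ((a, b) : 'I_n * nat) (i0,0)) => [[-> ->]|h0] /=.
  by case: eqP => [[]|_] //; case: eqP.
case: (eqVneq ((a, b) : 'I_n * nat) (i0,1)) => [[-> ->]|h1] /=.
  by case: eqP.
by rewrite (negbTE h0) (negbTE h1).
Qed.

Theorem mainTheorem10 (n : nat) (hn : (0 < n)%N) :
  exists phi : (Ray n -> Ray n) -> (Ray n -> Ray n),
    (forall s, houghton s -> houghton (phi s)) /\
    (forall s t, houghton s -> houghton t ->
        phi (hmul s t) = hmul (phi s) (phi t)) /\
    (forall s t, houghton s -> houghton t -> phi s = phi t -> s = t) /\
    (exists u, houghton u /\ forall s, houghton s -> phi s <> u).
Proof.
exists (@shiftc n); split; last split; last split.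
- move=> s [[g sg gs] [N [t Ht]]]; split.
    exists (shiftc g) => x; rewrite shiftc_comp.
      by rewrite (_ : (g \o s)%FUN = id) ?shiftc_id //; apply: functional_extensionality.
    by rewrite (_ : (s \o g)%FUN = id) ?shiftc_id //; apply: functional_extensionality.
  exists N.+1, t => i [|k] hk //=.
  have [-> h2] := Ht i k hk; split => //.
  by rewrite -(addn1 (s (i,k)).2) PoszD h2 -(addn1 k) PoszD addrAC.
- move=> s t _ _; apply: functional_extensionality => x.
  by rewrite /hmul /= shiftc_comp.
- move=> s t _ _ e; apply: functional_extensionality => [[i k]].
  have := congr1 (fun f => f (i, k.+1)) e; rewrite /shiftc /=.
  by case: (s (i,k)) => a b; case: (t (i,k)) => c d /= [-> ->].
- set i0 := Ordinal hn.
  exists (swp i0); split.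
    split; first by exists (swp i0); apply: swpK.
    exists 2, (fun _ => 0%R) => i k hk; rewrite /swp.
    have h0 : ((i, k) == (i0, 0)) = false.
      by apply/negbTE; apply/negP => /eqP [_ e]; rewrite e in hk.
    have h1 : ((i, k) == (i0, 1)) = false.
      by apply/negbTE; apply/negP => /eqP [_ e]; rewrite e in hk.
    by rewrite h0 h1 /= addr0.
  move=> s _ e.
  have := congr1 (fun f => f (i0, 0)) e; rewrite /shiftc /swp /=.
  by case.
Qed.
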